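(* Let $\mathfrak g$ be a real Lie algebra with a nice basis $\{e_1,\dots,e_n\}$, with root matrix $M_\Delta$ and its mod 2 reduction $M_{\Delta,2}$. Let $D=(d_1,\dots,d_n)\in\mathbb Z^n$, let $\delta\in(\mathbb Z_2)^n$ be its mod 2 reduction, and let $\mathfrak g_D=\operatorname{Span}_{\mathbb R}\mathcal B_D\subset\mathfrak g^{\mathbb C}$, where $\mathcal B_D=\{i^{d_1}e_1,\dots,i^{d_n}e_n\}$. Then: (a) if $M_{\Delta,2}\delta=0$, then $\mathfrak g_D$ is a real Lie subalgebra of $\mathfrak g^{\mathbb C}$ and $\mathcal B_D$ is a nice basis of it; in particular $\mathfrak g$ and $\mathfrak g_D$ have the same root matrix; (b) if $\delta$ is the mod 2 reduction of some $D'\in\mathbb Z^n$ with $M_\Delta D'=0$, then $\mathfrak g_D$ is isomorphic to $\mathfrak g$ as a nice Lie algebra; (c) conversely, if $\mathfrak g_D$ is a real Lie subalgebra of $\mathfrak g^{\mathbb C}$, then $M_{\Delta,2}\delta=0$.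
   Context: A nice basis of a Lie algebra $\mathfrak g$ is a basis $\{e_1,\dots,e_n\}$ (dual basis $\{e^i\}$) such that each $[e_i,e_j]$ is a multiple of some $e_k$ and each $e_i\lrcorner\, de^j$ is a multiple of some $e^k$ ($d$ the Chevalley–Eilenberg differential). The root matrix $M_\Delta$ has one row for each triple $(\{i,j\},k)$ such that $[e_i,e_j]$ is a nonzero multiple of $e_k$, with $+1$ in position $k$, $-1$ in positions $i$ and $j$, and $0$ elsewhere. $\mathfrak g^{\mathbb C}$ is the complexification, $i=\sqrt{-1}$. Two nice Lie algebras are isomorphic as nice Lie algebras if there is a Lie algebra isomorphism mapping each element of one nice basis to a nonzero multiple of an element of the other. *)

(* Defs.v *)
(* Real Lie algebras with a distinguished basis are encoded by
   their structure constants; the complexification is C^n = (R[i])^n with the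
   same structure constants. *)
From HB Require Import structures.
From mathcomp Require Import all_boot all_order all_algebra.
From mathcomp Require Import complex.
From mathcomp Require Import Rstruct.

Set Implicit Arguments.
Unset Strict Implicit.
Unset Printing Implicit Defensive.

Import Order.TTheory GRing.Theory Num.Theory.
Local Open Scope ring_scope.

Notation RR := Rdefinitions.R.

(* Structure constants: [e_i, e_j] = \sum_k c i j k e_k. *)
Definition sconst (F : Type) (n : nat) := 'I_n -> 'I_n -> 'I_n -> F.

Definition sc_bracket (F : pzRingType) (n : nat) (c : sconst F n)
  (x y : 'rV[F]_n) : 'rV[F]_n :=
  \row_k \sum_(i < n) \sum_(j < n) x 0 i * y 0 j * c i j k.

(* c defines a Lie algebra: the bracket (bilinear by construction) is
   alternating and satisfies the Jacobi identity. *)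
Definition is_lie_sc (F : pzRingType) (n : nat) (c : sconst F n) : Prop :=
  (forall x, sc_bracket c x x = 0) /\
  (forall x y z, sc_bracket c x (sc_bracket c y z)
                 + sc_bracket c y (sc_bracket c z x)
                 + sc_bracket c z (sc_bracket c x y) = 0).

(* The 1-form e_i _| de^j, as the function b |-> (e_i _| de^j)(e_b)
   = de^j(e_i, e_b) = - e^j([e_i, e_b]) (Chevalley-Eilenberg differential). *)
Definition interior_de (F : pzRingType) (n : nat) (c : sconst F n)
  (i j : 'I_n) : 'I_n -> F := fun b => - c i b j.

Definition nice_sc (F : pzRingType) (n : nat) (c : sconst F n) : Prop :=
  (forall i j : 'I_n, exists k : 'I_n, forall k', k' != k -> c i j k' = 0) /\
  (forall i j : 'I_n, exists k : 'I_n, forall b, b != k -> interior_de c i j b = 0).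

(* Triples ({i,j},k) with [e_i,e_j] a nonzero multiple of e_k; the unordered
   pair {i,j} is represented by (i,j) with i < j. *)
Definition rootset (F : pzRingType) (n : nat) (c : sconst F n)
  : {set ('I_n * 'I_n) * 'I_n} :=
  [set t : ('I_n * 'I_n) * 'I_n | (t.1.1 < t.1.2)%N && (c t.1.1 t.1.2 t.2 != 0)].

Definition root_matrix (F : pzRingType) (n : nat) (c : sconst F n)
  : 'M[int]_(#|rootset c|, n) :=
  \matrix_(r < #|rootset c|, l < n)
     let t := enum_val r in
     (((l == t.2) : nat)%:Z - ((l == t.1.1) : nat)%:Z - ((l == t.1.2) : nat)%:Z).

Definition mod2 (z : int) : 'Z_2 := z%:~R.
Definition root_matrix2 (F : pzRingType) (n : nat) (c : sconst F n)
  : 'M['Z_2]_(#|rootset c|, n) := map_mx mod2 (root_matrix c).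
Definition red2 (n : nat) (D : 'cV[int]_n) : 'cV['Z_2]_n := map_mx mod2 D.

Definition csc (R : rcfType) (n : nat) (c : sconst R n) : sconst R[i] n :=
  fun i j k => (c i j k)%:C%C.

Definition bD (R : rcfType) (n : nat) (D : 'cV[int]_n) (k : 'I_n) : 'rV[R[i]]_n :=
  (('i%C : R[i]) ^ (D k 0)) *: delta_mx 0 k.

Definition realcomb (R : rcfType) (n : nat) (D : 'cV[int]_n) (r : 'I_n -> R)
  : 'rV[R[i]]_n := \sum_(k < n) (r k)%:C%C *: bD R D k.

Definition in_gD (R : rcfType) (n : nat) (D : 'cV[int]_n) (x : 'rV[R[i]]_n) : Prop :=
  exists r : 'I_n -> R, x = realcomb D r.
Arguments in_gD R {n} D x.

Definition real_subalgebra (R : rcfType) (n : nat) (c : sconst R n)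
  (D : 'cV[int]_n) : Prop :=
  in_gD R D 0 /\
  (forall x y, in_gD R D x -> in_gD R D y -> in_gD R D (x + y)) /\
  (forall (a : R) x, in_gD R D x -> in_gD R D (a%:C%C *: x)) /\
  (forall x y, in_gD R D x -> in_gD R D y -> in_gD R D (sc_bracket (csc c) x y)).

(* Conclusion of (a): g_D is a real Lie subalgebra, B_D is a basis of it
   (it spans by definition; it is R-linearly independent), B_D is nice, i.e.
   the structure constants c' of g_D in the basis B_D satisfy nice_sc, and the
   root matrix of (g_D, B_D) is that of (g, {e_i}). *)
Definition part_a (R : rcfType) (n : nat) (c : sconst R n) (D : 'cV[int]_n) : Prop :=
  real_subalgebra c D /\
  (forall r : 'I_n -> R, realcomb D r = 0 -> forall k, r k = 0) /\
  exists c' : sconst R n,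
    (forall i j : 'I_n,
       sc_bracket (csc c) (bD R D i) (bD R D j)
       = \sum_(k < n) (c' i j k)%:C%C *: bD R D k) /\
    nice_sc c' /\
    exists E : #|rootset c'| = #|rootset c|,
      castmx (E, erefl n) (root_matrix c') = root_matrix c.

Definition nice_iso_gD (R : rcfType) (n : nat) (c : sconst R n) (D : 'cV[int]_n) : Prop :=
  exists (f : 'I_n -> 'I_n) (lam : 'I_n -> R),
    (forall i, lam i != 0) /\
    let phi := fun x : 'rV[R]_n =>
                 \sum_(i < n) (x 0 i * lam i)%:C%C *: bD R D (f i) in
    injective phi /\
    (forall y, in_gD R D y <-> exists x, y = phi x) /\
    (forall x y, phi (sc_bracket c x y) = sc_bracket (csc c) (phi x) (phi y)).

(* Main.v *)
Require Import Defs.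
From HB Require Import structures.
From mathcomp Require Import all_boot all_order all_algebra.
From mathcomp Require Import complex.
From mathcomp Require Import Rstruct.
From mathcomp Require Import ring.
Import Order.TTheory GRing.Theory Num.Theory.
Local Open Scope ring_scope.

Module Helpers.
Set Implicit Arguments. Unset Strict Implicit. Unset Printing Implicit Defensive.

Section Par.
Variable R : rcfType.
Local Notation C := R[i].
Local Notation ii := ('i%C : C).

Lemma ii_neq0 : ii != 0.
Proof. apply/eqP => h. have := sqr_i R. rewrite h expr0n /= => /eqP. by rewrite eq_sym oppr_eq0 oner_eq0. Qed.

Lemma mod2_2 : (2:int)%:~R = 0 :> 'Z_2. Proof. by apply/eqP. Qed.

Lemma ii_even q : exists s : R, s != 0 /\ ii ^ (q * 2) = s%:C%C.
Proof.
rewrite mulrC -exprz_exp.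
have -> : ii ^ (2:int) = (-1 : R)%:C%C by rewrite /exprz /= (sqr_i R) (rmorphN1 (real_complex R)).
exists ((-1 : R) ^ q); split; first by rewrite expfz_neq0 // oppr_eq0 oner_eq0.
by rewrite (rmorphXz (real_complex R)) // unitrN1.
Qed.

Lemma mod2_split z : mod2 z = mod2 (z %% 2)%Z.
Proof. by rewrite {1}(divz_eq z 2) /mod2 intrD intrM mod2_2 mulr0 add0r. Qed.

Lemma modz2_cases z : (z %% 2)%Z = 0 \/ (z %% 2)%Z = 1.
Proof.
have h0 := modz_ge0 z (isT : (2:int) != 0). have h1 := ltz_pmod z (isT : (0:int) < 2).
move: h0 h1; case: (z %% 2)%Z => [[|[|k]]|k] //= _ _; by [left|right].
Qed.

Lemma ii_real z : mod2 z = 0 -> exists s : R, s != 0 /\ ii ^ z = s%:C%C.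
Proof.
move=> hz; rewrite (divz_eq z 2).
case: (modz2_cases z) => h; last by move: hz; rewrite mod2_split h.
by rewrite h addr0; apply: ii_even.
Qed.

Lemma real_ii z (s : R) : ii ^ z = s%:C%C -> mod2 z = 0.
Proof.
rewrite mod2_split; case: (modz2_cases z) => h; first by rewrite h.
rewrite (divz_eq z 2) h expfzDr ?ii_neq0 //.
have [t [t0 ->]] := ii_even (z %/ 2)%Z.
move=> e. have : ((t%:C%C * ii) ^+ 2 = (s%:C%C) ^+ 2) by rewrite -e.
rewrite exprMn (sqr_i R) -!rmorphXn mulrN1 -rmorphN => /complexI /eqP.
rewrite -subr_eq0 => /eqP h2.
have : t ^+ 2 + s ^+ 2 == 0 by rewrite -oppr_eq0 opprD h2.
by rewrite paddr_eq0 ?sqr_ge0 // sqrf_eq0 (negbTE t0).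
Qed.
End Par.

Section Gen.
Variable R : rcfType.
Local Notation C := R[i].
Local Notation ii := ('i%C : C).
Variable n : nat.
Implicit Types (c : sconst R n) (D : 'cV[int]_n).

Lemma sum_pick (T : nmodType) (F : 'I_n -> T) a :
  (forall i, i != a -> F i = 0) -> \sum_i F i = F a.
Proof. by move=> h; rewrite (bigD1 a) //= big1 ?addr0. Qed.
Arguments sum_pick {T F} a.

Lemma bDE D k l : bD R D k 0 l = (l == k)%:R * ii ^ (D k 0).
Proof. by rewrite /bD !mxE eqxx /= mulrC. Qed.

Lemma realcombE D r l : realcomb D r 0 l = (r l)%:C%C * ii ^ (D l 0).
Proof.
rewrite /realcomb summxE (sum_pick l) => [|k kl]; rewrite mxE bDE.
  by rewrite eqxx mul1r.
by rewrite eq_sym (negbTE kl) mul0r mulr0.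
Qed.

Lemma brE (F : pzRingType) (cc : sconst F n) x y k :
  sc_bracket cc x y 0 k = \sum_i \sum_j x 0 i * y 0 j * cc i j k.
Proof. by rewrite mxE. Qed.

Lemma br_bD c D i j k :
  sc_bracket (csc c) (bD R D i) (bD R D j) 0 k = ii ^ (D i 0) * ii ^ (D j 0) * (c i j k)%:C%C.
Proof.
rewrite brE (sum_pick i) => [|a ai]; last first.
  by apply: big1 => b _; rewrite bDE (negbTE ai) !mul0r.
rewrite (sum_pick j) => [|b bj]; last by rewrite !bDE (negbTE bj) !mul0r mulr0 mul0r.
by rewrite !bDE !eqxx !mul1r.
Qed.

Lemma br_delta (F : pzRingType) (cc : sconst F n) a b k :
  sc_bracket cc (delta_mx 0 a) (delta_mx 0 b) 0 k = cc a b k.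
Proof.
rewrite brE (sum_pick a) => [|i ia]; last first.
  by apply: big1 => j _; rewrite !mxE (negbTE ia) andbF !mul0r.
rewrite (sum_pick b) => [|j jb]; last by rewrite !mxE (negbTE jb) andbF mulr0 mul0r.
by rewrite !mxE !eqxx /= !mul1r.
Qed.

Lemma brDl (F : pzRingType) (cc : sconst F n) x x' y :
  sc_bracket cc (x + x') y = sc_bracket cc x y + sc_bracket cc x' y.
Proof.
apply/rowP => k; rewrite !mxE -big_split /=; apply: eq_bigr => i _.
rewrite -big_split /=; apply: eq_bigr => j _; by rewrite !mxE !mulrDl.
Qed.

Lemma brDr (F : pzRingType) (cc : sconst F n) x y y' :
  sc_bracket cc x (y + y') = sc_bracket cc x y + sc_bracket cc x y'.
Proof.
apply/rowP => k; rewrite !mxE -big_split /=; apply: eq_bigr => i _.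
rewrite -big_split /=; apply: eq_bigr => j _; by rewrite !mxE mulrDr !mulrDl.
Qed.

Lemma addE (F : nmodType) (p q : nat) (A B : 'M[F]_(p, q)) i j : (A + B) i j = A i j + B i j.
Proof. by rewrite mxE. Qed.

Lemma alt_diag c : is_lie_sc c -> forall a k, c a a k = 0.
Proof. by case=> h _ a k; have := congr1 (fun m : 'rV[R]_n => m 0 k) (h (delta_mx 0 a)); rewrite /= br_delta mxE. Qed.

Lemma alt_anti c : is_lie_sc c -> forall a b k, c a b k = - c b a k.
Proof.
move=> L a b k; have := congr1 (fun m : 'rV[R]_n => m 0 k) (L.1 (delta_mx 0 a + delta_mx 0 b)).
rewrite /= brDl !brDr !addE !br_delta !alt_diag // add0r addr0 mxE => /eqP.
by rewrite addr_eq0 => /eqP.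
Qed.

Lemma rm_entry c (D : 'cV[int]_n) r :
  (root_matrix c *m D) r 0 = D (enum_val r).2 0 - D (enum_val r).1.1 0 - D (enum_val r).1.2 0.
Proof.
rewrite mxE.
under eq_bigr => l _ do rewrite mxE /= !mulrBl.
rewrite !sumrB.
have h : forall a : 'I_n, \sum_(l < n) ((l == a) : nat)%:Z * D l 0 = D a 0.
  move=> a; rewrite (sum_pick a) => [|l la]; first by rewrite eqxx mul1r.
  by rewrite (negbTE la) mul0r.
by rewrite !h.
Qed.

Lemma rm2_entry c D r :
  (root_matrix2 c *m red2 D) r 0 = mod2 ((root_matrix c *m D) r 0).
Proof.
rewrite !mxE /mod2 (big_morph _ (@intrD _) (mulr0z 1)); apply: eq_bigr => l _.
by rewrite /root_matrix2 /red2 !mxE /mod2 intrM.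
Qed.

Lemma root_pair c (Q : 'I_n -> 'I_n -> 'I_n -> Prop) : is_lie_sc c ->
  (forall a b l, Q a b l -> Q b a l) ->
  (forall r : 'I_#|rootset c|, Q (enum_val r).1.1 (enum_val r).1.2 (enum_val r).2) ->
  forall a b l, c a b l != 0 -> Q a b l.
Proof.
move=> L hs hr.
have key : forall a b l : 'I_n, (a < b)%N -> c a b l != 0 -> Q a b l.
  move=> a b l ab cn.
  have tin : ((a, b), l) \in rootset c by rewrite inE /= ab cn.
  by have := hr (enum_rank_in tin ((a, b), l)); rewrite enum_rankK_in.
move=> a b l cn; case: (ltngtP a b) => h.
- exact: key.
- by apply: hs; apply: key => //; rewrite alt_anti // oppr_eq0.
- have e : a = b by apply: val_inj.
  by move: cn; rewrite e alt_diag // eqxx.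
Qed.

End Gen.

Section Main.
Variable R : rcfType.
Local Notation C := R[i].
Local Notation ii := ('i%C : C).
Variable n : nat.
Implicit Types (c : sconst R n) (D : 'cV[int]_n).

Lemma rCM (x y : R) : (x * y)%:C%C = x%:C%C * y%:C%C :> C.
Proof. exact: (rmorphM (real_complex R)). Qed.
Lemma rCD (x y : R) : (x + y)%:C%C = x%:C%C + y%:C%C :> C.
Proof. exact: (rmorphD (real_complex R)). Qed.
Lemma rCsum (F : 'I_n -> R) : (\sum_i F i)%:C%C = \sum_i (F i)%:C%C :> C.
Proof. exact: (rmorph_sum (real_complex R)). Qed.

Lemma ee x y : ii ^ (x - y) * ii ^ y = ii ^ x.
Proof. by rewrite -expfzDr ?ii_neq0 // subrK. Qed.

Lemma mod2_flip x y z : mod2 (z - x - y) = 0 -> mod2 (x + y - z) = 0.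
Proof.
move=> h; rewrite (_ : x + y - z = - (z - x - y)); last by ring.
by rewrite /mod2 intrN -/(mod2 _) h oppr0.
Qed.

Lemma inb D k : in_gD R D (bD R D k).
Proof.
exists (fun l => (l == k)%:R); apply/rowP => l; rewrite realcombE bDE.
by case: eqP => [->|_]; rewrite (rmorph_nat (real_complex R)) // !mul0r.
Qed.

Lemma part_c c D : is_lie_sc c -> real_subalgebra c D -> root_matrix2 c *m red2 D = 0.
Proof.
move=> L [_ [_ [_ hb]]].
apply/matrixP => r z; rewrite (ord1 z) rm2_entry rm_entry [RHS]mxE.
have : enum_val r \in rootset c := enum_valP r.
rewrite inE => /andP [_ cn].
case: (hb _ _ (inb D (enum_val r).1.1) (inb D (enum_val r).1.2)) => u hu.
have := congr1 (fun m : 'rV[C]_n => m 0 (enum_val r).2) hu.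
rewrite /= br_bD realcombE.
set i := (enum_val r).1.1; set j := (enum_val r).1.2; set k := (enum_val r).2.
move: cn; rewrite -/i -/j -/k => cn.
rewrite -expfzDr ?ii_neq0 // -(ee (D i 0 + D j 0) (D k 0)) mulrAC => /(mulIf (expfz_neq0 _ (ii_neq0 R))) e.
have e2 : ii ^ (D i 0 + D j 0 - D k 0) = (u k / c i j k)%:C%C.
  have cn' : (c i j k)%:C%C != 0 :> C by rewrite (fmorph_eq0 (real_complex R)).
  apply: (mulIf cn'); rewrite e -rCM divfK //.
have := real_ii e2.
rewrite (_ : D i 0 + D j 0 - D k 0 = - (D k 0 - D i 0 - D j 0)); last by ring.
by rewrite /mod2 intrN => /eqP; rewrite oppr_eq0 => /eqP.
Qed.

Definition rmS (S : {set ('I_n * 'I_n) * 'I_n}) : 'M[int]_(#|S|, n) :=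
  \matrix_(r < #|S|, l < n)
     let t := enum_val r in
     (((l == t.2) : nat)%:Z - ((l == t.1.1) : nat)%:Z - ((l == t.1.2) : nat)%:Z).

Lemma rm_cast (S S' : {set ('I_n * 'I_n) * 'I_n}) (e : S' = S) (E : #|S'| = #|S|) :
  castmx (E, erefl n) (rmS S') = rmS S.
Proof. by destruct e; rewrite (eq_irrelevance E (erefl _)) castmx_id. Qed.

Lemma rm_cast2 (c1 c2 : sconst R n) (e : rootset c1 = rootset c2) (E : #|rootset c1| = #|rootset c2|) :
  castmx (E, erefl n) (root_matrix c1) = root_matrix c2.
Proof.
rewrite /root_matrix; move: E; move: (rootset c1) e => S1 e1; destruct e1 => E.
by rewrite (eq_irrelevance E (erefl _)) castmx_id.
Qed.

Lemma part_a_pf c D : is_lie_sc c -> nice_sc c -> root_matrix2 c *m red2 D = 0 -> part_a c D.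
Proof.
move=> L N H.
have par : forall a b l, c a b l != 0 -> mod2 (D a 0 + D b 0 - D l 0) = 0.
  apply: (root_pair (Q := fun a b l => mod2 (D a 0 + D b 0 - D l 0) = 0) L).
  - by move=> a b l; rewrite (addrC (D b 0)).
  - move=> r; have := congr1 (fun m : 'cV['Z_2]_#|rootset c| => m r 0) H.
    by rewrite /= rm2_entry rm_entry [in X in _ = X -> _]mxE => /mod2_flip.
pose c' := fun a b l => c a b l * complex.Re (ii ^ (D a 0 + D b 0 - D l 0)).
have key : forall a b l, (c a b l)%:C%C * (ii ^ (D a 0) * ii ^ (D b 0)) = (c' a b l)%:C%C * ii ^ (D l 0)
     /\ (c' a b l != 0) = (c a b l != 0).
  move=> a b l; rewrite /c'; have [->|cn] := eqVneq (c a b l) 0.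
    by rewrite !mul0r eqxx.
  have [s [s0 hs]] := @ii_real R _ (par _ _ _ cn).
  rewrite hs /= mulf_neq0 //; split=> //.
  by rewrite rCM -hs -mulrA ee expfzDr ?ii_neq0.
clearbody c'.
have z' : forall a b l, c a b l = 0 -> c' a b l = 0.
  by move=> a b l h; apply/eqP; rewrite -[_ == 0]negbK (key a b l).2 h eqxx.
have brR : forall r s, sc_bracket (csc c) (realcomb D r) (realcomb D s)
    = realcomb D (fun l => \sum_a \sum_b r a * s b * c' a b l).
  move=> r s; apply/rowP => l; rewrite brE realcombE rCsum mulr_suml.
  apply: eq_bigr => a _; rewrite rCsum mulr_suml.
  apply: eq_bigr => b _; rewrite !realcombE !rCM /csc -[RHS]mulrA -(key a b l).1.
  ring.
split.
  split; [|split; [|split]].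
  - exists (fun _ => 0); apply/rowP => l; rewrite realcombE (rmorph0 (real_complex R)) mul0r mxE.
    by [].
  - move=> x y [r ->] [s ->]; exists (fun k => r k + s k); apply/rowP => l.
    by rewrite addE !realcombE rCD mulrDl.
  - move=> a x [r ->]; exists (fun k => a * r k); apply/rowP => l.
    by rewrite mxE !realcombE rCM mulrA.
  - move=> x y [r ->] [s ->]; eexists; exact: brR.
split.
  move=> r h k; have := congr1 (fun m : 'rV[C]_n => m 0 k) h.
  rewrite /= realcombE mxE => /eqP; rewrite mulf_eq0 expfz_eq0 (negbTE (ii_neq0 R)) andbF orbF.
  by rewrite (fmorph_eq0 (real_complex R)) => /eqP.
exists c'; split; [|split].
- move=> i j; apply/rowP => l.
  have -> : \sum_(k < n) (c' i j k)%:C%C *: bD R D k = realcomb D (c' i j) by [].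
  by rewrite br_bD realcombE mulrC (key i j l).1.
- case: N => [N1 N2]; split.
  + move=> i j; case: (N1 i j) => k hk; exists k => k' /hk; exact: z'.
  + move=> i j; case: (N2 i j) => k hk; exists k => b /hk; rewrite /interior_de => /eqP.
    by rewrite oppr_eq0 => /eqP /z' ->; rewrite oppr0.
- have rs : rootset c' = rootset c by apply/setP => t; rewrite !inE (key _ _ _).2.
  have E : #|rootset c'| = #|rootset c| by rewrite rs.
  exists E.
  exact: (rm_cast2 rs).
Qed.

Lemma part_b_pf c D : is_lie_sc c ->
  (exists D' : 'cV[int]_n, root_matrix c *m D' = 0 /\ red2 D' = red2 D) -> nice_iso_gD c D.
Proof.
move=> L [D' [HM H2]].
have rel : forall a b l, c a b l != 0 -> D' l 0 = D' a 0 + D' b 0.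
  apply: (root_pair (Q := fun a b l => D' l 0 = D' a 0 + D' b 0) L).
  - by move=> a b l ->; rewrite addrC.
  - move=> r; have := congr1 (fun m : 'cV[int]_#|rootset c| => m r 0) HM.
    rewrite /= rm_entry [in X in _ = X -> _]mxE => h; apply/eqP.
    by rewrite -subr_eq0 opprD addrA h.
have par : forall l, mod2 (D' l 0 - D l 0) = 0.
  move=> l; have := congr1 (fun m : 'cV['Z_2]_n => m l 0) H2.
  by rewrite /red2 !mxE /mod2 intrB => ->; rewrite subrr.
pose lam l := complex.Re (ii ^ (D' l 0 - D l 0)).
have hlam : forall l, lam l != 0 /\ (lam l)%:C%C * ii ^ (D l 0) = ii ^ (D' l 0).
  move=> l; have [s [s0 hs]] := @ii_real R _ (par l); rewrite /lam hs /=; split=> //.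
  by rewrite -hs ee.
exists (fun i => i), lam; split; first by move=> i; exact: (hlam i).1.
move=> phi.
have phiE : forall x l, phi x 0 l = (x 0 l)%:C%C * ii ^ (D' l 0).
  move=> x l; have -> : phi x = realcomb D (fun i => x 0 i * lam i) by [].
  by rewrite realcombE rCM -mulrA (hlam l).2.
split; [|split].
- move=> x y h; apply/rowP => l; have := congr1 (fun m : 'rV[C]_n => m 0 l) h.
  by rewrite /= !phiE => /(mulIf (expfz_neq0 _ (ii_neq0 R))) /complexI.
- move=> y; split.
  + case=> r ->; exists (\row_i (r i / lam i)); apply/rowP => l.
    rewrite phiE realcombE mxE -(hlam l).2 mulrA -rCM divfK //.
    exact: (hlam l).1.
  + by case=> x ->; exists (fun i => x 0 i * lam i).
- move=> x y; apply/rowP => l; rewrite phiE !brE /csc.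
  rewrite rCsum mulr_suml; apply: eq_bigr => a _.
  rewrite rCsum mulr_suml; apply: eq_bigr => b _.
  rewrite !phiE !rCM.
  have [->|cn] := eqVneq (c a b l) 0; first by rewrite (rmorph0 (real_complex R)) !mulr0 mul0r.
  rewrite (rel _ _ _ cn) expfzDr ?ii_neq0 //; ring.
Qed.

End Main.

End Helpers.
Import Helpers.

Theorem proposition1p12 (n : nat) (c : sconst RR n) :
  is_lie_sc c -> nice_sc c ->
  forall D : 'cV[int]_n,
    (root_matrix2 c *m red2 D = 0 -> part_a c D) /\
    ((exists D' : 'cV[int]_n, root_matrix c *m D' = 0 /\ red2 D' = red2 D) ->
       nice_iso_gD c D) /\
    (real_subalgebra c D -> root_matrix2 c *m red2 D = 0).
Proof.
move=> L N D; split; first by move=> H; apply: part_a_pf.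
split; first exact: part_b_pf.
exact: part_c.
Qed.
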